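(* Let $(G,I,O)$ be a geometry with a flow $(f,\preceq)$, and let $P_h=v_1\to\cdots\to v_{r}$ and $P_j=w_1\to\cdots\to w_{s}$ be two distinct paths of the path cover $\mathcal P_f$ (whose arcs are exactly the arcs $v\to f(v)$, $v\in O^c$). If $v_aw_b\in E(G)$ and $v_cw_d\in E(G)$ with $a<c$, then $b\le d$.
   Context: Graphs are finite, simple, undirected, without self-loops; $v\sim w$ denotes adjacency. A geometry is $(G,I,O)$ with $I,O\subseteq V(G)$; $O^c=V(G)\setminus O$, $I^c=V(G)\setminus I$. A flow for $(G,I,O)$ is a pair $(f,\preceq)$, $f:O^c\to I^c$, $\preceq$ a partial order on $V(G)$, with, for all $v\in O^c$, $w\in V(G)$: $v\sim f(v)$; $v\preceq f(v)$; $w\sim f(v)\Rightarrow v\preceq w$. For a flow, $f$ is injective and the arcs $v\to f(v)$ ($v\in O^c$) form a family $\mathcal P_f$ of vertex-disjoint directed paths covering $V(G)$, each ending in $O$. *)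

(* Defs.v *)
From mathcomp Require Import all_boot.
Set Implicit Arguments. Unset Strict Implicit. Unset Printing Implicit Defensive.

Definition simple_graph (T : finType) (e : rel T) : Prop :=
  symmetric e /\ irreflexive e.

Definition partial_order (T : finType) (le : rel T) : Prop :=
  reflexive le /\ antisymmetric le /\ transitive le.

(* (f, le) is a flow for the geometry (G, I, O).  f is a total function T -> T
   but only its values on O^c matter (f : O^c -> I^c). *)
Definition is_flow (T : finType) (e : rel T) (I O : {set T}) (f : T -> T)
    (le : rel T) : Prop :=
  partial_order le /\
  forall v, v \notin O ->
    [/\ f v \notin I, e v (f v), le v (f v) & forall w, e w (f v) -> le v w].

(* p = [v_1; ...; v_r] is one of the paths of the path cover P_f, i.e. a maximal
   directed path of arcs v -> f v (v in O^c): it is nonempty, consecutive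
   vertices are joined by arcs, it ends in O, and its first vertex has no
   incoming arc. *)
Definition flow_path (T : finType) (O : {set T}) (f : T -> T) (p : seq T) : Prop :=
  [/\ p != [::],
      forall i x0, i.+1 < size p -> nth x0 p i \notin O /\ f (nth x0 p i) = nth x0 p i.+1,
      forall x0, last x0 p \in O
    & forall x0 v, v \notin O -> f v != head x0 p].

(* Main.v *)
Require Import Defs.
From mathcomp Require Import all_boot.

Section S.
Variables (T : finType) (e : rel T) (I O : {set T}) (f : T -> T) (le : rel T).
Hypothesis Hfl : is_flow e I O f le.

Lemma finj v w : v \notin O -> w \notin O -> f v = f w -> v = w.
Proof.
case: Hfl => [[_ [Ha _]] H] vO wO E.
have [_ ew _ Hv] := H v vO.
have [_ ew' _ Hw] := H w wO.
apply: Ha; apply/andP; split.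
  by apply: Hv; rewrite E.
by apply: Hw; rewrite -E.
Qed.

Lemma back p q x0 i j : flow_path O f p -> flow_path O f q ->
  i < size p -> j < size q -> nth x0 p i = nth x0 q j -> nth x0 p 0 = nth x0 q 0.
Proof.
move=> [_ Pp _ Hp] [_ Pq _ Hq].
elim: i j => [|i IH] [|j] //= ip jq E.
- have [nO fE] := Pq j x0 jq.
  by move: (Hp x0 _ nO); rewrite fE -E -nth0 eqxx.
- have [nO fE] := Pp i x0 ip.
  by move: (Hq x0 _ nO); rewrite fE E -nth0 eqxx.
- have [nO fE] := Pp i x0 ip.
  have [nO' fE'] := Pq j x0 jq.
  apply: (IH j (ltnW ip) (ltnW jq)).
  by apply: finj => //; rewrite fE fE'.
Qed.

Lemma fwd p q x0 : flow_path O f p -> flow_path O f q ->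
  nth x0 p 0 = nth x0 q 0 -> forall k, k < size p -> k < size q /\ nth x0 p k = nth x0 q k.
Proof.
move=> [_ Pp _ _] [qn Pq Lq _] E0.
elim=> [|k IH] kp.
  by split => //; case: q qn {Pq Lq E0}.
have [kq Ek] := IH (ltnW kp).
have [nO fE] := Pp k x0 kp.
case: (ltnP k.+1 (size q)) => kq'.
  have [_ fE'] := Pq k x0 kq'.
  by split => //; rewrite -fE -fE' Ek.
have Sq : size q = k.+1 by apply/eqP; rewrite eqn_leq kq'.
move: (Lq x0); rewrite -nth_last Sq /= -Ek.
by rewrite (negbTE nO).
Qed.


Lemma pord p x0 i j : flow_path O f p -> i <= j -> j < size p ->
  le (nth x0 p i) (nth x0 p j).
Proof.
case: Hfl => [[Hr [_ Ht]] H] [_ Pp _ _] ij.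
elim: j ij => [|j IH]; first by rewrite leqn0 => /eqP -> _; apply: Hr.
rewrite leq_eqVlt => /orP [/eqP -> _|]; first by apply: Hr.
rewrite ltnS => ij jp.
have [nO fE] := Pp j x0 jp.
apply: Ht (IH ij (ltnW jp)) _.
by rewrite -fE; have [] := H _ nO.
Qed.

Lemma peq p q x0 i j : flow_path O f p -> flow_path O f q ->
  i < size p -> j < size q -> nth x0 p i = nth x0 q j -> p = q.
Proof.
move=> fp fq ip jq E.
have E0 := @back p q x0 i j fp fq ip jq E.
have F1 := @fwd p q x0 fp fq E0.
have F2 := @fwd q p x0 fq fp (esym E0).
have [pn _ _ _] := fp; have [qn _ _ _] := fq.
have Sp : 0 < size p by case: p pn {fp ip E E0 F1 F2}.
have Sq : 0 < size q by case: q qn {fq jq E E0 F1 F2}.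
have S : size p = size q.
  apply/eqP; rewrite eqn_leq; apply/andP; split.
    have h : (size p).-1 < size p by rewrite prednK.
    by have [] := F1 _ h; rewrite prednK.
  have h : (size q).-1 < size q by rewrite prednK.
  by have [] := F2 _ h; rewrite prednK.
apply: (eq_from_nth (x0 := x0) S) => k kp.
by have [] := F1 k kp.
Qed.
End S.

Theorem mainTheorem7 (T : finType) (e : rel T) (I O : {set T})
    (f : T -> T) (le : rel T) (p q : seq T) (x0 : T) (a b c d : nat) :
  simple_graph e ->
  is_flow e I O f le ->
  flow_path O f p -> flow_path O f q -> p != q ->
  a < size p -> c < size p -> b < size q -> d < size q ->
  e (nth x0 p a) (nth x0 q b) -> e (nth x0 p c) (nth x0 q d) ->
  a < c -> b <= d.
Proof.
move=> [Hs _] Hfl fp fq pq ap cp bq dq e1 e2 ac.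
case: (leqP b d) => // db.
exfalso; move/negP: pq; apply.
case: b bq e1 db => // b bq e1 db.
case: c cp e2 ac => // c cp e2 ac.
have [[_ [Ha Ht]] H] := Hfl.
have [_ Pp _ _] := fp; have [_ Pq _ _] := fq.
have [nO1 fE1] := Pq b x0 bq.
have [nO2 fE2] := Pp c x0 cp.
have l1 : le (nth x0 q b) (nth x0 p a).
  have [_ _ _ Hw] := H _ nO1; apply: Hw; by rewrite fE1.
have l2 : le (nth x0 p c) (nth x0 q d).
  have [_ _ _ Hw] := H _ nO2; apply: Hw; by rewrite fE2 Hs.
have l3 := @pord _ _ _ _ _ _ Hfl p x0 a c fp ac (ltnW cp).
have l4 := @pord _ _ _ _ _ _ Hfl q x0 d b fq db (ltnW bq).
have E : nth x0 p a = nth x0 q b.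
  apply: Ha; rewrite l1 andbT.
  exact: Ht (Ht _ _ _ l3 l2) l4.
apply/eqP; exact: (@peq _ _ _ _ _ _ Hfl p q x0 a b fp fq ap (ltnW bq) E).
Qed.
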